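(* Let $\mathcal G=(\mathcal V,\mathcal E)$ be a strongly connected directed graph on $\mathcal V=\{1,\dots,n\}$, let $\mathcal D$ be an upper bound on its diameter, and let $\mathcal P=[p_{ij}]$ be a primitive column-stochastic weighted adjacency matrix of $\mathcal G$. Let $\varepsilon>0$ and let $u_i^0\in\mathbb R^p$, $i\in\mathcal V$, be arbitrary initial vectors. If all agents execute the finite-time $\varepsilon$-consensus protocol described in the context, then for every agent $i\in\mathcal V$ the protocol terminates after finitely many iterations, i.e. there is a finite $m$ with $\widehat R_i^{m-1}<\varepsilon$.
   Context: Conventions: $(i,j)\in\mathcal E$ denotes a directed edge from $j$ to $i$; the in-neighborhood of $i$ is $\mathcal N_i^-=\{j\neq i:(i,j)\in\mathcal E\}$. The graph is strongly connected: for every ordered pair of distinct nodes there is a directed path between them. $\mathcal P$ is column-stochastic ($p_{ij}\ge 0$, $\sum_{i}p_{ij}=1$ for every $j$), primitive (irreducible with a unique eigenvalue of maximum modulus), and a weighted adjacency matrix of $\mathcal G$ ($p_{ij}=0$ unless $j=i$ or $j\in\mathcal N_i^-$). The diameter of $\mathcal G$ is the longest shortest directed path length between two nodes. Norms are Euclidean. Finite-time $\varepsilon$-consensus protocol: each agent $i$ sets $w_i^0=u_i^0$, $v_i^0=1$, $R_i^0=0$, $m=1$, and for $t=0,1,2,\dots$ computes $u_i^{t+1}=p_{ii}u_i^t+\sum_{j\in\mathcal N_i^-}p_{ij}u_j^t$, $v_i^{t+1}=p_{ii}v_i^t+\sum_{j\in\mathcal N_i^-}p_{ij}v_j^t$,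 $w_i^{t+1}=u_i^{t+1}/v_i^{t+1}$, and $R_i^{t+1}=\max_{j\in\mathcal N_i^-}\{\|w_i^{t+1}-w_j^{t}\|+R_j^{t}\}$. Whenever $t=m\mathcal D-1$, agent $i$ sets $\widehat R_i^{m-1}=R_i^{t+1}$; if $\widehat R_i^{m-1}<\varepsilon$ it terminates (declares $\varepsilon$-consensus), otherwise it resets $R_i^{t+1}=0$ and sets $m\leftarrow m+1$. *)

(* Defs.v *)
From HB Require Import structures.
From mathcomp Require Import all_boot all_order all_algebra.
From mathcomp Require Import reals.
From mathcomp Require Import complex.
Set Implicit Arguments. Unset Strict Implicit. Unset Printing Implicit Defensive.
Import Order.TTheory GRing.Theory Num.Theory.
Local Open Scope ring_scope.

Section Defs.
Variable n : nat.

(* Convention: [E i j] means (i,j) is an edge, i.e. a directed edge FROM j TO i. *)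
Definition step (E : rel 'I_n) : rel 'I_n := fun a b => E b a.

Definition Nin (E : rel 'I_n) (i : 'I_n) : {set 'I_n} :=
  [set j | (j != i) && E i j].

Definition dipath (E : rel 'I_n) (j i : 'I_n) (s : seq 'I_n) : Prop :=
  path (step E) j s /\ last j s = i.

Definition strongly_connected (E : rel 'I_n) : Prop :=
  forall i j : 'I_n, i != j -> exists s, dipath E j i s.

Definition diameter_le (E : rel 'I_n) (D : nat) : Prop :=
  forall i j : 'I_n, exists s, dipath E j i s /\ (size s <= D)%N.

Definition column_stochastic {R : realType} (P : 'M[R]_n) : Prop :=
  (forall i j, 0 <= P i j) /\ (forall j, \sum_i P i j = 1).

Definition weighted_adjacency {R : realType} (E : rel 'I_n) (P : 'M[R]_n) : Prop :=
  forall i j, j != i -> j \notin Nin E i -> P i j = 0.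

(* irreducible: not reducible, i.e. no simultaneous permutation of rows and
   columns brings P to block upper-triangular form; equivalently there is no
   nonempty proper index set S with P i j = 0 whenever i \notin S, j \in S. *)
Definition irreducible_mx {R : realType} (P : 'M[R]_n) : Prop :=
  ~ exists S : {set 'I_n}, [/\ S != set0, S != setT &
        forall i j, i \notin S -> j \in S -> P i j = 0].

Definition eigenvalue_C {R : realType} (P : 'M[R]_n) (l : R[i]) : Prop :=
  root (char_poly (map_mx (fun x : R => x%:C%C) P)) l.

Definition primitive_mx {R : realType} (P : 'M[R]_n) : Prop :=
  irreducible_mx P /\
  exists l0 : R[i], eigenvalue_C P l0 /\
    forall l, eigenvalue_C P l -> l != l0 -> `|l| < `|l0|.

Definition enorm {R : realType} {p : nat} (x : 'rV[R]_p) : R :=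
  Num.sqrt (\sum_k x 0 k ^+ 2).

Section Protocol.
Variables (R : realType) (p : nat) (E : rel 'I_n) (P : 'M[R]_n) (D : nat)
          (u0 : 'I_n -> 'rV[R]_p).

Fixpoint u_seq (t : nat) : 'I_n -> 'rV[R]_p :=
  match t with
  | 0 => u0
  | t'.+1 => fun i => P i i *: u_seq t' i + \sum_(j in Nin E i) P i j *: u_seq t' j
  end.

Fixpoint v_seq (t : nat) : 'I_n -> R :=
  match t with
  | 0 => fun _ => 1
  | t'.+1 => fun i => P i i * v_seq t' i + \sum_(j in Nin E i) P i j * v_seq t' j
  end.

Definition w_seq (t : nat) (i : 'I_n) : 'rV[R]_p := (v_seq t i)^-1 *: u_seq t i.

(* R_seq t i = value of R_i^t as computed by the update rule, BEFORE any reset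
   performed at time t.  R_i^0 = 0; at times t = m D (m >= 1) the agent records
   \hat R_i^{m-1} = R_i^{mD} and then resets R_i^{mD} to 0, so the value used
   by the next update is 0 whenever D divides t. *)
Fixpoint R_seq (t : nat) : 'I_n -> R :=
  match t with
  | 0 => fun _ => 0
  | t'.+1 => fun i =>
      \big[Num.max/0]_(j in Nin E i)
         (enorm (w_seq t'.+1 i - w_seq t' j) + (if (D %| t')%N then 0 else R_seq t' j))
  end.

(* \hat R_i^{m-1} = R_i^{mD} (before reset) *)
Definition Rhat (m : nat) (i : 'I_n) : R := R_seq ((m.+1) * D) i.

End Protocol.
End Defs.

(* Main.v *)
Require Import Defs.
From HB Require Import structures.
From mathcomp Require Import all_boot all_order all_algebra.
From mathcomp Require Import reals.
From mathcomp Require Import complex.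
From mathcomp Require Import ring lra zify.
Set Implicit Arguments. Unset Strict Implicit. Unset Printing Implicit Defensive.
Import Order.TTheory GRing.Theory Num.Theory.
Local Open Scope ring_scope.

Section RealAn.
Variable R : realType.

Lemma geo_aux (r : R) (t : nat) : 0 < r < 1 ->
  r ^+ t <= 1 /\ (1 + t%:R * (r^-1 - 1)) * r ^+ t <= 1.
Proof.
move=> /andP[r0 r1]; elim: t => [|t [IH1 IH2]].
  by rewrite expr0 mul0r addr0 mulr1 lexx.
have rt0 : 0 <= r ^+ t by rewrite exprn_ge0 // ltW.
split; first by rewrite exprS; apply: (le_trans _ IH1); rewrite ler_piMl // ltW.
have h : r * (r^-1 - 1) = 1 - r by rewrite mulrBr divrr ?unitfE ?gt_eqF // mulr1.
have -> : (1 + t.+1%:R * (r^-1 - 1)) * r ^+ t.+1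
   = r * ((1 + t%:R * (r^-1 - 1)) * r ^+ t) + (1 - r) * r ^+ t.
  by rewrite -h exprS -natr1; ring.
have : r * ((1 + t%:R * (r^-1 - 1)) * r ^+ t) <= r by rewrite ler_piMr // ltW.
have : (1 - r) * r ^+ t <= 1 - r by rewrite ler_piMr // subr_ge0 ltW.
lra.
Qed.

Lemma geo0 (r e : R) : 0 <= r < 1 -> 0 < e ->
  exists N, forall t, (N <= t)%N -> r ^+ t < e.
Proof.
move=> /andP[r0 r1] e0; have [->|rn0] := eqVneq r 0.
  by exists 1%N => -[|t] // _; rewrite expr0n.
have rp : 0 < r by rewrite lt_def rn0.
set h := r^-1 - 1.
have hp : 0 < h by rewrite subr_gt0 invf_gt1.
have x0 : 0 <= (e * h)^-1 by rewrite invr_ge0 ltW // mulr_gt0.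
have rr : 0 < r < 1 by rewrite rp r1.
exists (Num.bound (e * h)^-1) => t Nt.
have [_ H] := geo_aux t rr.
have tb : (e * h)^-1 < t%:R.
  by apply: (lt_le_trans (archi_boundP x0)); rewrite ler_nat.
have ehp : 0 < e * h by rewrite mulr_gt0.
have : 1 < e * (t%:R * h).
  rewrite -(ltr_pM2r ehp) mulVf ?gt_eqF // in tb.
  by rewrite mulrCA mulrA; apply: (lt_le_trans tb); rewrite mulrA.
have rt0 : 0 <= r ^+ t by rewrite exprn_ge0.
have tp : 0 < t%:R * h by apply: mulr_gt0 => //; apply: le_lt_trans tb.
move=> H2; rewrite -(@ltr_pM2r _ (t%:R * h)) //.
apply: (le_lt_trans _ H2); move: H rt0; rewrite -/h.
set X := r ^+ t; set Y := t%:R * h => H rt0.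
have : X * Y = (1 + Y) * X - X by ring.
lra.
Qed.

Lemma rec_decay (a b : nat -> R) (r : R) : 0 <= r < 1 ->
  (forall t, a t.+1 <= r * a t + b t) ->
  (forall e, 0 < e -> exists N, forall t, (N <= t)%N -> b t < e) ->
  forall e, 0 < e -> exists N, forall t, (N <= t)%N -> a t < e.
Proof.
move=> /andP[r0 r1] Hab Hb e e0.
have e'0 : 0 < e * (1 - r) / 2 by rewrite divr_gt0 // mulr_gt0 // subr_gt0.
have [N1 HN1] := Hb _ e'0.
have key : forall k, a (N1 + k)%N <= r ^+ k * a N1 + e / 2.
  elim=> [|k IH]; first by rewrite addn0 expr0 mul1r lerDl divr_ge0 // ltW.
  rewrite addnS; apply: (le_trans (Hab _)).
  have := HN1 (N1 + k)%N (leq_addr _ _).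
  have := ler_wpM2l r0 IH.
  rewrite exprS -mulrA. lra.
have [aN|aN] := lerP (a N1) 0.
  exists N1 => t Nt; rewrite -(subnKC Nt).
  apply: (le_lt_trans (key _)).
  have : r ^+ (t - N1) * a N1 <= 0 by rewrite mulr_ge0_le0 // exprn_ge0.
  have : e / 2 < e by rewrite ltr_pdivrMr // ltr_pMr // ltr1n.
  lra.
have rr : 0 <= r < 1 by rewrite r0 r1.
have eaN : 0 < e / 2 / a N1 by rewrite !divr_gt0.
have [N2 HN2] := geo0 rr eaN.
exists (N1 + N2)%N => t Nt.
have Nt1 : (N1 <= t)%N by apply: leq_trans Nt; apply: leq_addr.
rewrite -(subnKC Nt1); apply: (le_lt_trans (key _)).
have : r ^+ (t - N1) * a N1 < e / 2.
  by rewrite -ltr_pdivlMr // HN2 // leq_subRL.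
have : e / 2 + e / 2 = e by rewrite -splitr.
lra.
Qed.
End RealAn.
Section Cx.
Variable R : realType.
Local Notation C := R[i].
Local Notation nc := (@Normc.normc R).
Local Notation rc := (real_complex R).

Lemma nc_ge0 (z : C) : 0 <= nc z.
Proof. by case: z => a b; rewrite /= sqrtr_ge0. Qed.

Lemma ncR (x : R) : nc (rc x) = `|x|.
Proof. by rewrite /= expr0n /= addr0 sqrtr_sqr. Qed.

Lemma Re_le (z : C) : `|complex.Re z| <= nc z.
Proof.
case: z => a b /=; rewrite -sqrtr_sqr.
by rewrite ler_sqrt ?addr_ge0 ?sqr_ge0 // lerDl sqr_ge0.
Qed.

Lemma normC_nc (z : C) : `|z| = rc (nc z).
Proof. by case: z => a b; rewrite normc_def. Qed.

Lemma nc_sum (I : Type) (r : seq I) (Pr : pred I) (F : I -> C) :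
  nc (\sum_(i <- r | Pr i) F i) <= \sum_(i <- r | Pr i) nc (F i).
Proof.
elim/big_rec2: _ => [|i y1 y2 _ H]; first by rewrite Normc.normc0.
by apply: (le_trans (le_normcD _ _)); rewrite lerD2l.
Qed.

Definition Nv m (x : 'cV[C]_m) : R := \sum_i nc (x i 0).

Lemma Nv_ge0 m (x : 'cV[C]_m) : 0 <= Nv x.
Proof. by apply: sumr_ge0 => i _; apply: nc_ge0. Qed.

Lemma NvD m (x y : 'cV[C]_m) : Nv (x + y) <= Nv x + Nv y.
Proof. by rewrite /Nv -big_split /=; apply: ler_sum => i _; rewrite mxE le_normcD. Qed.

Lemma NvZ m (l : C) (x : 'cV[C]_m) : Nv (l *: x) = nc l * Nv x.
Proof. by rewrite /Nv mulr_sumr; apply: eq_bigr => i _; rewrite mxE Normc.normcM. Qed.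

Lemma NvN m (x : 'cV[C]_m) : Nv (- x) = Nv x.
Proof. by apply: eq_bigr => i _; rewrite mxE normcN. Qed.

Lemma NvMn m (x : 'cV[C]_m) k : Nv (x *+ k) = Nv x *+ k.
Proof. by rewrite /Nv -sumrMnl; apply: eq_bigr => i _; rewrite mulmxnE normcMn. Qed.

Lemma Nv0 m : Nv (0 : 'cV[C]_m) = 0.
Proof. by rewrite /Nv big1 // => i _; rewrite mxE Normc.normc0. Qed.

Lemma Nv_eq0 m (x : 'cV[C]_m) : Nv x = 0 -> x = 0.
Proof.
move=> /eqP; rewrite psumr_eq0 => [/allP H|i _]; last exact: nc_ge0.
apply/matrixP => i j; rewrite ord1 mxE.
by apply: Normc.eq0_normc; apply/eqP; apply: (implyP (H i (mem_index_enum _))).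
Qed.

Lemma nc_le_Nv m (x : 'cV[C]_m) i : nc (x i 0) <= Nv x.
Proof.
rewrite /Nv (bigD1 i) //= lerDl; apply: sumr_ge0 => j _; exact: nc_ge0.
Qed.

Lemma NvA m (P : 'M[R]_m) (x : 'cV[C]_m) : column_stochastic P ->
  Nv (map_mx rc P *m x) <= Nv x.
Proof.
move=> [P0 P1]; rewrite /Nv.
apply: (le_trans (y := \sum_i \sum_j P i j * nc (x j 0))).
  apply: ler_sum => i _; rewrite mxE; apply: (le_trans (nc_sum _ _ _)).
  by apply: ler_sum => j _; rewrite mxE Normc.normcM ncR ger0_norm.
rewrite exchange_big /=; apply: ler_sum => j _.
by rewrite -mulr_suml P1 mul1r.
Qed.


Section Sq.
Variable n' : nat.
Local Notation n := n'.+1.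
Variable P : 'M[R]_n.
Local Notation A := (map_mx rc P).

Definition cvg0 (s : nat -> 'cV[C]_n) :=
  forall e : R, 0 < e -> exists N, forall t, (N <= t)%N -> Nv (s t) < e.

Lemma hm_XsubC (z : C) : horner_mx A ('X - z%:P) = A - z%:M.
Proof. by rewrite rmorphB /= horner_mx_X horner_mx_C. Qed.

Lemma decay (s : seq C) : (forall z, z \in s -> nc z < 1) ->
  forall X : 'cV[C]_n, horner_mx A (\prod_(z <- s) ('X - z%:P)) *m X = 0 ->
  cvg0 (fun t => A ^+ t *m X).
Proof.
elim: s => [_ X|z s IH Hs X].
  rewrite big_nil rmorph1 mul1mx => -> e e0; exists 0%N => t _.
  by rewrite mulmx0 Nv0.
rewrite big_cons mulrC rmorphM /= hm_XsubC -mulmxA => HX.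
set Y := (A - z%:M) *m X.
have HY : cvg0 (fun t => A ^+ t *m Y).
  apply: IH => [w ws|//]; apply: Hs; by rewrite inE ws orbT.
have Hz : 0 <= nc z < 1 by rewrite nc_ge0 Hs // inE eqxx.
apply: (rec_decay Hz _ HY) => t.
have -> : A ^+ t.+1 *m X = z *: (A ^+ t *m X) + A ^+ t *m Y.
  rewrite exprSr -mulmxA /Y mulmxBl mul_scalar_mx mulmxBr scalemxAr.
  by rewrite addrC subrK.
by rewrite -NvZ; apply: NvD.
Qed.


Lemma bounded (Pcs : column_stochastic P) (X : 'cV[C]_n) t :
  Nv (A ^+ t *m X) <= Nv X.
Proof.
elim: t => [|t IH]; first by rewrite expr0 mul1mx.
by rewrite exprS -mulmxA; apply: le_trans (NvA _ Pcs) IH.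
Qed.

Lemma unip2 (Pcs : column_stochastic P) (Z : 'cV[C]_n) :
  ((A - 1) ^+ 2) *m Z = 0 -> (A - 1) *m Z = 0.
Proof.
rewrite expr2 -mulmxA; set W := (A - 1) *m Z => HW.
have AW : A *m W = W by apply/eqP; rewrite -subr_eq0 -HW mulmxBl mul1mx.
have AZ : A *m Z = Z + W by rewrite /W mulmxBl mul1mx addrC subrK.
have Ht : forall t, A ^+ t *m Z = Z + W *+ t.
  elim=> [|t IH]; first by rewrite expr0 mul1mx addr0.
  have AWt : forall k, A *m (W *+ k) = W *+ k.
    elim=> [|k IHk]; first by rewrite mulmx0.
    by rewrite mulrS mulmxDr AW IHk.
  by rewrite exprS -mulmxA IH mulmxDr AZ AWt mulrS addrA.
have Hb : forall k, Nv W *+ k <= Nv Z *+ 2.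
  move=> k; rewrite -NvMn.
  have -> : W *+ k = A ^+ k *m Z - Z by rewrite Ht addrC addKr.
  apply: (le_trans (NvD _ _)); rewrite NvN mulr2n lerD2r; exact: bounded.
apply: Nv_eq0; apply/eqP; rewrite eq_le Nv_ge0 andbT; apply/negP => /negP.
rewrite -ltNge => Wp.
have x0 : 0 <= Nv Z *+ 2 / Nv W.
  by apply: divr_ge0; [rewrite mulrn_wge0 // Nv_ge0 | exact: ltW].
have := archi_boundP x0; rewrite ltr_pdivrMr // mulr_natl => H.
by have := lt_le_trans H (Hb _); rewrite ltxx.
Qed.

Lemma unip (Pcs : column_stochastic P) k (X : 'cV[C]_n) :
  ((A - 1) ^+ k) *m X = 0 -> A *m X = X.
Proof.
elim: k X => [|k IH] X.
  by rewrite expr0 mul1mx => ->; rewrite mulmx0.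
case: k IH => [_|k IH].
  by rewrite expr1 mulmxBl mul1mx => /eqP; rewrite subr_eq0 => /eqP.
move=> H; apply: IH; rewrite exprS -mulmxA; apply: unip2 => //.
have E : (A - 1) ^+ 2 *m (A - 1) ^+ k = (A - 1) ^+ k.+2.
  change ((A - 1) ^+ 2 * (A - 1) ^+ k = (A - 1) ^+ k.+2).
  by rewrite -exprD addnC addn2.
by rewrite mulmxA E.
Qed.

Lemma fixpow (X : 'cV[C]_n) t : A *m X = X -> A ^+ t *m X = X.
Proof.
move=> H; elim: t => [|t IH]; first by rewrite expr0 mul1mx.
by rewrite exprSr -mulmxA H IH.
Qed.

Lemma hmM (p q : {poly C}) : horner_mx A p *m horner_mx A q = horner_mx A (p * q).
Proof. by rewrite rmorphM. Qed.

Lemma cp_tr (M : 'M[C]_n) : char_poly M^T = char_poly M.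
Proof.
rewrite /char_poly -det_tr; congr (determinant _); rewrite /char_poly_mx.
by rewrite linearB /= tr_scalar_mx map_trmx trmxK.
Qed.

Lemma eig_le1 (Pcs : column_stochastic P) (l : C) : root (char_poly A) l -> nc l <= 1.
Proof.
rewrite -cp_tr -eigenvalue_root_char => /eigenvalueP [v Hv vn0].
have H : A *m v^T = l *: v^T.
  by rewrite -[A]trmxK -trmx_mul Hv linearZ.
have := NvA v^T Pcs; rewrite H NvZ.
have Np : 0 < Nv v^T.
  rewrite lt_def Nv_ge0 andbT; apply/eqP => /Nv_eq0 /eqP.
  by rewrite -trmx0 (inj_eq (@trmx_inj _ _ _)) (negbTE vn0).
by rewrite -[X in _ <= X]mul1r ler_pM2r.
Qed.

Lemma one_root (Pcs : column_stochastic P) : root (char_poly A) 1.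
Proof.
rewrite -eigenvalue_root_char; apply/eigenvalueP; exists (const_mx 1).
  apply/matrixP => i j; rewrite !mxE.
  under eq_bigr do rewrite !mxE mul1r.
  by rewrite -rmorph_sum /= (proj2 Pcs) rmorph1 mulr1.
by apply/eqP => /matrixP /(_ 0 0); rewrite !mxE; apply/eqP; rewrite oner_eq0.
Qed.

Lemma spectral (Pcs : column_stochastic P) (Pprim : primitive_mx P) :
  forall l, root (char_poly A) l -> l != 1 -> nc l < 1.
Proof.
case: Pprim => _ [l0 [Hl0 Hl]].
have l01 : l0 = 1.
  apply/eqP; apply/negP => /negP ne.
  have := Hl 1 (one_root Pcs); rewrite eq_sym => /(_ ne).
  rewrite normr1 normC_nc -(rmorph1 rc) ltcR => H.
  by have := lt_le_trans H (eig_le1 Pcs Hl0); rewrite ltxx.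
move=> l Hr ne; have := Hl l Hr; rewrite l01 => /(_ ne).
by rewrite normr1 normC_nc -(rmorph1 rc) ltcR.
Qed.

Lemma limit_C (Pcs : column_stochastic P)
  (Pspec : forall l, root (char_poly A) l -> l != 1 -> nc l < 1) (X : 'cV[C]_n) :
  exists X1, A *m X1 = X1 /\ cvg0 (fun t => A ^+ t *m X - X1).
Proof.
set chi := char_poly A.
have chi0 : chi != 0 by rewrite monic_neq0 // char_poly_monic.
have [a [q Hq Echi]] := multiplicity_XsubC chi 1.
rewrite chi0 /= in Hq.
have q0 : q != 0 by apply: contra chi0 => /eqP q0; rewrite Echi q0 mul0r.
have cop : coprimep q (('X - 1%:P) ^+ a).
  by apply: coprimep_expr; rewrite coprimep_XsubC.
have [[u1 u2] /= Hu] := Bezout_eq1_coprimepP _ _ cop.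
have CH : horner_mx A chi = 0 := Cayley_Hamilton A.
set X1 := horner_mx A (u1 * q) *m X.
set X2 := horner_mx A (u2 * ('X - 1%:P) ^+ a) *m X.
have EX : X = X1 + X2 by rewrite /X1 /X2 -mulmxDl -rmorphD Hu rmorph1 mul1mx.
have HX1 : (A - 1) ^+ a *m X1 = 0.
  have -> : (A - 1) ^+ a = horner_mx A (('X - 1%:P) ^+ a) by rewrite rmorphXn /= hm_XsubC.
  rewrite /X1 mulmxA hmM.
  have -> : ('X - 1%:P) ^+ a * (u1 * q) = u1 * chi.
    by rewrite Echi mulrC -mulrA.
  by rewrite -hmM CH mulmx0 mul0mx.
have AX1 : A *m X1 = X1 := unip Pcs HX1.
exists X1; split => //.
have [r Hr] := closed_field_poly_normal q.
have HX2 : horner_mx A (\prod_(z <- r) ('X - z%:P)) *m X2 = 0.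
  have : horner_mx A q *m X2 = 0.
    rewrite /X2 mulmxA hmM.
    have -> : q * (u2 * ('X - 1%:P) ^+ a) = u2 * chi by rewrite Echi mulrCA.
    by rewrite -hmM CH mulmx0 mul0mx.
  rewrite {1}Hr -mul_polyC -hmM horner_mx_C mul_scalar_mx -scalemxAl => /eqP.
  rewrite scaler_eq0 lead_coef_eq0 (negbTE q0) /= => /eqP //.
have Hroots : forall z, z \in r -> nc z < 1.
  move=> z zr; have rq : root q z.
    by rewrite Hr rootZ ?lead_coef_eq0 // root_prod_XsubC.
  apply: Pspec.
    by have : root chi z by rewrite Echi rootM rq.
  by apply: contraNneq Hq => <-.
have := decay Hroots HX2.
have E : forall t, A ^+ t *m X - X1 = A ^+ t *m X2.
  by move=> t; rewrite {1}EX mulmxDr fixpow // addrC addKr.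
by move=> H e e0; have [N HN] := H e e0; exists N => t Nt; rewrite E; apply: HN.
Qed.
End Sq.

Lemma ReB (y : R) (z : C) : complex.Re (rc y - z) = y - complex.Re z.
Proof. by case: z => a b /=. Qed.
Lemma ReM (y : R) (z : C) : complex.Re (rc y * z) = y * complex.Re z.
Proof. by case: z => a b /=; rewrite mul0r subr0. Qed.
Lemma ReS (I : Type) (r : seq I) (F : I -> C) :
  complex.Re (\sum_(i <- r) F i) = \sum_(i <- r) complex.Re (F i).
Proof.
have ReD : forall a b : C, complex.Re (a + b) = complex.Re a + complex.Re b.
  by case=> a1 a2 [b1 b2].
elim: r => [|x r IH]; first by rewrite !big_nil.
by rewrite !big_cons ReD IH.
Qed.

Section Real.
Variable n' : nat.
Local Notation n := n'.+1.
Variable P : 'M[R]_n.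
Local Notation A := (map_mx rc P).

Lemma mapX t : map_mx rc (P ^+ t) = A ^+ t.
Proof.
elim: t => [|t IH]; first by rewrite !expr0 map_mx1.
by rewrite !exprS -IH; exact: map_mxM.
Qed.

Definition cvgR (s : nat -> 'cV[R]_n) (l : 'cV[R]_n) :=
  forall e : R, 0 < e -> exists N, forall t, (N <= t)%N -> forall i, `|s t i 0 - l i 0| < e.

Lemma limit_R (Pcs : column_stochastic P) (Pprim : primitive_mx P) (x : 'cV[R]_n) :
  exists l : 'cV[R]_n, P *m l = l /\ cvgR (fun t => P ^+ t *m x) l.
Proof.
have [X1 [AX1 HX1]] := limit_C Pcs (spectral Pcs Pprim) (map_mx rc x).
exists (map_mx (@complex.Re R) X1); split.
  apply/matrixP => i j; rewrite ord1 !mxE.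
  have := congr1 (fun M : 'cV[C]_n => complex.Re (M i 0)) AX1; rewrite /= mxE => <-.
  by rewrite ReS; apply: eq_bigr => k _; rewrite !mxE ReM.
move=> e e0; have [N HN] := HX1 e e0; exists N => t Nt i.
have := HN t Nt; apply: le_lt_trans; rewrite -mapX -map_mxM.
apply: le_trans (nc_le_Nv _ i); rewrite !mxE -ReB; exact: Re_le.
Qed.
End Real.
End Cx.

Section Fin.
Variable R : realType.

Lemma bigmax_le0 (I : finType) (A : {pred I}) (F : I -> R) (c : R) :
  0 <= c -> (forall j, j \in A -> F j <= c) -> \big[Num.max/0]_(j in A) F j <= c.
Proof.
move=> c0 H; elim/big_ind: _ => //.
  by move=> x y hx hy; rewrite ge_max hx hy.
Qed.

Lemma unif (p : nat) (Q : 'I_p -> nat -> Prop) :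
  (forall k, exists N, forall t, (N <= t)%N -> Q k t) ->
  exists N, forall t, (N <= t)%N -> forall k, Q k t.
Proof.
move=> /fin_all_exists [f Hf]; exists (\max_(k < p) f k)%N => t Nt k.
by apply: Hf; apply: leq_trans Nt; apply: (leq_bigmax k).
Qed.

Lemma enorm_le (p : nat) (x : 'rV[R]_p) : enorm x <= \sum_k `|x 0 k|.
Proof.
rewrite /enorm -[X in _ <= X]ger0_norm ?sumr_ge0 // -sqrtr_sqr.
rewrite ler_sqrt ?sqr_ge0 // expr2 mulr_suml.
apply: ler_sum => k _; rewrite -real_normK ?num_real // expr2 ler_wpM2l //.
by rewrite (bigD1 k) //= lerDl sumr_ge0.
Qed.

Variable n : nat.

Lemma sum_adj (E : rel 'I_n) (P : 'M[R]_n) (Hadj : weighted_adjacency E P)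
  (f : 'I_n -> R) i :
  \sum_j P i j * f j = P i i * f i + \sum_(j in Nin E i) P i j * f j.
Proof.
rewrite (bigD1 i) //=; congr (_ + _).
rewrite (bigID (fun j => j \in Nin E i)) /= [X in _ + X]big1 ?addr0.
  by apply: eq_bigl => j; rewrite andb_idl // inE => /andP[].
by move=> j /andP[ji jn]; rewrite Hadj ?mul0r.
Qed.

Lemma ratio_const (P : 'M[R]_n) (l m : 'cV[R]_n) :
  (forall i j, 0 <= P i j) -> irreducible_mx P ->
  P *m l = l -> P *m m = m -> (forall i, 0 < m i 0) ->
  forall i j, l i 0 / m i 0 = l j 0 / m j 0.
Proof.
move=> P0 Pirr Hl Hm mp i j.
case: n P l m P0 Pirr Hl Hm mp i j => [|n'] P l m P0 Pirr Hl Hm mp i j; first by case: i.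
pose z k := l k 0 / m k 0.
have [i0 _ Hmax] := @arg_maxP _ _ 'I_n'.+1 ord0 xpredT z isT.
set M := z _ in Hmax.
have lk : forall k, l k 0 = z k * m k 0 by move=> k; rewrite /z divfK // gt_eqF.
have key : forall a b, z a = M -> z b != M -> P a b = 0.
  move=> a b za zb.
  have El : l a 0 = \sum_k P a k * l k 0.
    by have := congr1 (fun X : 'cV[R]_n'.+1 => X a 0) Hl; rewrite mxE => <-.
  have Em : m a 0 = \sum_k P a k * m k 0.
    by have := congr1 (fun X : 'cV[R]_n'.+1 => X a 0) Hm; rewrite mxE => <-.
  have : \sum_k P a k * m k 0 * (M - z k) = 0.
    under eq_bigr do rewrite mulrBr.
    rewrite sumrB -mulr_suml -Em.
    under eq_bigr do rewrite -mulrA [m _ 0 * _]mulrC -lk.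
    by rewrite -El lk za mulrC subrr.
  move/eqP; rewrite psumr_eq0 => [/allP /(_ b (mem_index_enum _))|k _]; last first.
    by apply: mulr_ge0; [apply: mulr_ge0 => //; apply: ltW | rewrite subr_ge0; exact: Hmax].
  rewrite /= !mulf_eq0 subr_eq0 [M == _]eq_sym (negbTE zb) orbF (gt_eqF (mp b)) orbF.
  by move/eqP.
have allM : forall k, z k = M.
  move=> k; apply/eqP; apply/negP => /negP zk; apply: Pirr.
  exists [set k | z k != M]; split.
  - by apply/set0Pn; exists k; rewrite inE.
  - apply/eqP => /setP /(_ i0); rewrite !inE eqxx /=.
    by [].
  - by move=> a b; rewrite !inE negbK => /eqP za zb; apply: key.
by rewrite -/(z i) -/(z j) !allM.
Qed.

Lemma pos_fixed (P : 'M[R]_n) (m : 'cV[R]_n) :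
  (forall i j, 0 <= P i j) -> irreducible_mx P ->
  P *m m = m -> (forall i, 0 <= m i 0) -> (exists i, 0 < m i 0) ->
  forall i, 0 < m i 0.
Proof.
move=> P0 Pirr Hm m0 [k mk] i.
case: (boolP (0 < m i 0)) => // ni; exfalso; apply: Pirr.
exists [set j | 0 < m j 0]; split.
- by apply/set0Pn; exists k; rewrite inE.
- by apply/eqP => /setP /(_ i); rewrite !inE (negbTE ni).
move=> a b; rewrite !inE => na mb.
have ma : m a 0 = 0 by apply/eqP; rewrite eq_le m0 andbT leNgt.
have := congr1 (fun X : 'cV[R]_n => X a 0) Hm; rewrite mxE ma => /eqP.
rewrite psumr_eq0 => [/allP /(_ b (mem_index_enum _))|c _]; last by rewrite mulr_ge0.
by rewrite /= mulf_eq0 (gt_eqF mb) orbF => /eqP.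
Qed.

End Fin.

Section Proto.
Variables (R : realType) (n' p : nat) (E : rel 'I_n'.+1) (P : 'M[R]_n'.+1)
  (u0 : 'I_n'.+1 -> 'rV[R]_p) (D : nat).
Local Notation n := n'.+1.

Definition xk (k : 'I_p) : 'cV[R]_n := \col_i (u0 i 0 k).
Definition one : 'cV[R]_n := const_mx 1.

Lemma u_mat (Hadj : weighted_adjacency E P) t i k :
  u_seq E P u0 t i 0 k = (P ^+ t *m xk k) i 0.
Proof.
elim: t i => [|t IH] i; first by rewrite expr0 mul1mx mxE.
have -> : u_seq E P u0 t.+1 i = P i i *: u_seq E P u0 t i
   + \sum_(j in Nin E i) P i j *: u_seq E P u0 t j by [].
rewrite exprS -mulmxA [RHS]mxE (sum_adj Hadj (fun j => (P ^+ t *m xk k) j 0)) /= [LHS]mxE.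
congr (_ + _); first by rewrite mxE IH.
by rewrite summxE; apply: eq_bigr => j _; rewrite mxE IH.
Qed.

Lemma v_mat (Hadj : weighted_adjacency E P) t i :
  v_seq E P t i = (P ^+ t *m one) i 0.
Proof.
elim: t i => [|t IH] i; first by rewrite expr0 mul1mx mxE.
have -> : v_seq E P t.+1 i = P i i * v_seq E P t i
   + \sum_(j in Nin E i) P i j * v_seq E P t j by [].
rewrite exprS -mulmxA [RHS]mxE (sum_adj Hadj (fun j => (P ^+ t *m one) j 0)) /=.
congr (_ + _); first by rewrite IH.
by apply: eq_bigr => j _; rewrite IH.
Qed.

Lemma Pt_nonneg (Pcs : column_stochastic P) t (x : 'cV[R]_n) :
  (forall i, 0 <= x i 0) -> forall i, 0 <= (P ^+ t *m x) i 0.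
Proof.
move=> x0; elim: t => [|t IH] i; first by rewrite expr0 mul1mx.
rewrite exprS -mulmxA mxE; apply: sumr_ge0 => j _.
by apply: mulr_ge0 => //; apply: Pcs.1.
Qed.

Lemma sum_pres (Pcs : column_stochastic P) t (x : 'cV[R]_n) :
  \sum_i (P ^+ t *m x) i 0 = \sum_i x i 0.
Proof.
elim: t => [|t IH]; first by rewrite expr0 mul1mx.
rewrite exprS -mulmxA -IH.
under eq_bigr do rewrite mxE.
rewrite exchange_big /=; apply: eq_bigr => j _.
by rewrite -mulr_suml Pcs.2 mul1r.
Qed.

Lemma Rbound (eta : R) N m : 0 <= eta ->
  (forall s, (N <= s)%N -> forall a b,
      enorm (w_seq E P u0 s.+1 a - w_seq E P u0 s b) <= eta) ->
  (N <= m * D)%N ->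
  forall k, (k < D)%N -> forall i, R_seq E P D u0 (m * D + k.+1) i <= k.+1%:R * eta.
Proof.
move=> eta0 Hs HN; elim=> [|k IH] kD i.
  rewrite addn1 /= dvdn_mull // mul1r; apply: bigmax_le0 => // j _.
  by rewrite addr0; apply: Hs.
rewrite addnS /=.
have nd : (D %| m * D + k.+1)%N = false.
  by rewrite dvdn_addr ?dvdn_mull // gtnNdvd // ltnW.
rewrite nd; apply: bigmax_le0 => [|j _].
  by rewrite mulr_ge0.
rewrite [k.+2%:R]mulrS mulrDl mul1r lerD //.
  by apply: Hs; apply: leq_trans HN (leq_addr _ _).
by apply: IH; apply: ltnW.
Qed.

End Proto.

Lemma w_entry (R : realType) (n' p : nat) (E : rel 'I_n'.+1) (P : 'M[R]_n'.+1)
  (u0 : 'I_n'.+1 -> 'rV[R]_p) (Hadj : weighted_adjacency E P) t i k :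
  w_seq E P u0 t i 0 k = (P ^+ t *m xk u0 k) i 0 / (P ^+ t *m @one R n') i 0.
Proof. by rewrite /w_seq mxE u_mat // v_mat // mulrC. Qed.

Lemma rowB (R : realType) (p : nat) (x y : 'rV[R]_p) k : (x - y) 0 k = x 0 k - y 0 k.
Proof. by rewrite !mxE. Qed.

Unset Implicit Arguments.
Set Strict Implicit.

Theorem proposition3p1 (R : realType) (n p : nat) (E : rel 'I_n) (D : nat)
    (P : 'M[R]_n) (eps : R) (u0 : 'I_n -> 'rV[R]_p) :
  strongly_connected E ->
  (0 < D)%N -> diameter_le E D ->
  column_stochastic P -> primitive_mx P -> weighted_adjacency E P ->
  0 < eps ->
  forall i : 'I_n, exists m : nat, (0 < m)%N /\ Rhat E P D u0 m.-1 i < eps.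
Proof.
move=> _ D0 _ Pcs Pprim Hadj e0 i.
case: n E P u0 Pcs Pprim Hadj i => [|n'] E P u0 Pcs Pprim Hadj i; first by case: i.
have P0 := Pcs.1; have Pirr := Pprim.1.
have [l2 [Fl2 C2]] := limit_R Pcs Pprim (@one R n').
have one0 : forall i, 0 <= @one R n' i 0 by move=> j; rewrite mxE.
have l2nn : forall i, 0 <= l2 i 0.
  move=> j; rewrite leNgt; apply/negP => neg.
  have ng : 0 < - l2 j 0 by rewrite oppr_gt0.
  have [N HN] := C2 (- l2 j 0) ng.
  have := HN N (leqnn N) j; rewrite ltr_norml => /andP[_].
  rewrite ltrBlDr addNr ltNge.
  by rewrite (Pt_nonneg Pcs N one0 j).
have l2ex : exists i, 0 < l2 i 0.
  case: (boolP [exists j, 0 < l2 j 0]) => [/existsP //|].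
  rewrite negb_exists => /forallP Hn; exfalso.
  have h2 : 0 < 1 / 2 :> R by rewrite divr_gt0.
  have [N HN] := C2 (1 / 2) h2.
  have Hs := sum_pres Pcs N (@one R n').
  have : \sum_i (P ^+ N *m @one R n') i 0 <= \sum_(i < n'.+1) (1 / 2 : R).
    apply: ler_sum => j _; have := HN N (leqnn N) j.
    rewrite ltr_norml => /andP[_]; rewrite ltrBlDr => H.
    apply: ltW; apply: (lt_le_trans H).
    by rewrite gerDl; move: (Hn j); rewrite -leNgt.
  rewrite sum_pres //.
  under eq_bigr do rewrite mxE.
  rewrite !sumr_const !card_ord lerMn2r /=.
  have : (1 / 2 : R) < 1 by rewrite ltr_pdivrMr // mul1r ltr1n.
  by move=> h /(lt_le_trans h); rewrite ltxx.
have l2p := pos_fixed P0 Pirr Fl2 l2nn l2ex.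
have /fin_all_exists [L HL] : forall k : 'I_p, exists l : 'cV[R]_n'.+1,
    P *m l = l /\ cvgR (fun t => P ^+ t *m xk u0 k) l.
  by move=> k; apply: limit_R.
pose c k := L k ord0 0 / l2 ord0 0.
have Lc : forall k j, L k j 0 = c k * l2 j 0.
  move=> k j; rewrite /c -(ratio_const P0 Pirr (HL k).1 Fl2 l2p j ord0).
  by rewrite divfK // gt_eqF.
have W : forall d : R, 0 < d -> exists N, forall t, (N <= t)%N ->
    forall j k, `|w_seq E P u0 t j 0 k - c k| < d.
  move=> d d0; apply: unif => j; apply: unif => k.
  set lj := l2 j 0; have ljp : 0 < lj := l2p j.
  set e2 := d * lj / 2 / (1 + `|c k|).
  have e2p : 0 < e2 by rewrite divr_gt0 ?divr_gt0 ?mulr_gt0 // ltr_pwDl.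
  have lj2 : 0 < lj / 2 by rewrite divr_gt0.
  have [N1 H1] := C2 (lj / 2) lj2.
  have [N2 H2] := (HL k).2 e2 e2p.
  have [N3 H3] := C2 e2 e2p.
  exists (N1 + N2 + N3)%N => t Nt.
  have t1 : (N1 <= t)%N by lia.
  have t2 : (N2 <= t)%N by lia.
  have t3 : (N3 <= t)%N by lia.
  rewrite w_entry //.
  set a := (P ^+ t *m xk u0 k) j 0; set b := (P ^+ t *m @one R n') j 0.
  have hb : `|b - lj| < lj / 2 := H1 t t1 j.
  have ha : `|a - L k j 0| < e2 := H2 t t2 j.
  have hb2 : `|b - lj| < e2 := H3 t t3 j.
  have bpos : lj / 2 < b.
    move: hb; rewrite ltr_norml => /andP[h _].
    lra.
  have b0 : 0 < b by apply: lt_trans bpos.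
  have -> : a / b - c k = (a - c k * b) / b by field; rewrite gt_eqF.
  have key : `|a - c k * b| < d * lj / 2.
    have -> : a - c k * b = (a - L k j 0) - c k * (b - lj) by rewrite Lc mulrBr opprB addrA subrK.
    apply: (le_lt_trans (ler_normB _ _)); rewrite normrM.
    have -> : d * lj / 2 = e2 + `|c k| * e2 by rewrite /e2; field; rewrite gt_eqF // ltr_pwDl.
    rewrite ltr_leD //; apply: ler_wpM2l => //; exact: ltW.
  rewrite normrM normfV (gtr0_norm b0) ltr_pdivrMr //.
  apply: (lt_le_trans key); rewrite -mulrA ler_wpM2l ?ltW //.
have Dp : (0 : R) < D%:R by rewrite ltr0n.
pose eta := eps / (2 * D%:R).
have etap : 0 < eta by rewrite divr_gt0 // mulr_gt0.
pose d := eta / (2 * (p%:R + 1)).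
have dp : 0 < d by rewrite divr_gt0 // mulr_gt0 // ltr_pwDr.
have [N HN] := W d dp.
have step : forall s, (N <= s)%N -> forall a b,
    enorm (w_seq E P u0 s.+1 a - w_seq E P u0 s b) <= eta.
  move=> s Ns a b; apply: le_trans (enorm_le _) _.
  apply: (le_trans (y := \sum_(k < p) (2 * d))).
    apply: ler_sum => k _.
    rewrite rowB.
    apply: (le_trans (ler_distD (c k) _ _)).
    rewrite distrC mulr2n mulrDl mul1r.
    by apply: ltW; apply: ltrD; rewrite distrC; apply: HN; lia.
  rewrite -(big_mkord xpredT (fun _ => 2 * d)) sumr_const_nat subn0 -(mulr_natr (2 * d) p) /d.
  set q := p%:R.
  have q0 : 0 <= q by rewrite ler0n.
  have -> : 2 * (eta / (2 * (q + 1))) * q = eta - eta / (q + 1).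
    by field; rewrite gt_eqF // ltr_pwDr.
  have : 0 <= eta / (q + 1) by rewrite divr_ge0 ?ltW // ltr_pwDr.
  lra.
exists N.+1; split => //=.
rewrite /Rhat.
have -> : (N.+1 * D = N * D + (D.-1).+1)%N by rewrite prednK // mulSn addnC.
apply: le_lt_trans (Rbound (ltW etap) step _ _ i) _.
- by rewrite leq_pmulr.
- by rewrite prednK.
rewrite prednK // /eta.
have -> : D%:R * (eps / (2 * D%:R)) = eps / 2 by field; rewrite gt_eqF.
lra.
Qed.
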